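(* For an integer $n\geq 1$ and non-negative integers $j_1,\ldots,j_n$ with $j_1,j_n\geq 1$, \[\sum_{k=0}^n(-1)^k\,\zeta^{1/2}(2j_1+1,\ldots,2j_k+1)\,\zeta^{1/2}(2j_n+1,2j_{n-1}+1,\ldots,2j_{k+1}+1)=0,\] where $\zeta^{1/2}$ of the empty index is $1$.
   Context: For integers $k_1\geq 2$, $k_2,\ldots,k_n\geq 1$, $\zeta(k_1,\ldots,k_n)=\sum_{m_1>\cdots>m_n>0}m_1^{-k_1}\cdots m_n^{-k_n}$. Let $\mathbf{p}$ run over all indices of the form $(k_1\square k_2\square\cdots\square k_n)$ where each $\square$ is a comma or a plus sign, and $\sigma(\mathbf{p})$ the number of plus signs; define $\zeta^t(k_1,\ldots,k_n)=\sum_{\mathbf{p}}t^{\sigma(\mathbf{p})}\zeta(\mathbf{p})$ and $\zeta^{1/2}$ its value at $t=1/2$. *)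

(* Defs.v *)
From Stdlib Require Import Reals List ClassicalEpsilon.
Import ListNotations.
Open Scope R_scope.

Fixpoint sum_lt (f : nat -> R) (M : nat) : R :=
  match M with
  | O => 0
  | S M' => sum_lt f M' + f M'
  end.

(* mzv_trunc M [k1;...;kn] = sum_{M > m1 > ... > mn > 0} m1^-k1 ... mn^-kn ;
   mzv_trunc M [] = 1. *)
Fixpoint mzv_trunc (M : nat) (ks : list nat) : R :=
  match ks with
  | nil => 1
  | k :: ks' =>
      sum_lt (fun i => / (INR (S i)) ^ k * mzv_trunc (S i) ks') (pred M)
  end.

(* The limit of a real sequence, if it converges (0 otherwise). *)
Definition seq_lim (u : nat -> R) : R :=
  match excluded_middle_informative (exists l, Un_cv u l) with
  | left H => proj1_sig (constructive_indefinite_description _ H)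
  | right _ => 0
  end.

Definition mzv (ks : list nat) : R := seq_lim (fun N => mzv_trunc N ks).

(* All indices p obtained from (k1 [] k2 [] ... [] kn) with each [] a comma or
   a plus, paired with the number sigma(p) of plus signs. *)
Fixpoint compositions (ks : list nat) : list (list nat * nat) :=
  match ks with
  | nil => [(nil, O)]
  | k :: rest =>
      flat_map (fun ps =>
        match fst ps with
        | nil => [([k], snd ps)]
        | q :: p' => [(k :: q :: p', snd ps); ((k + q)%nat :: p', S (snd ps))]
        end) (compositions rest)
  end.

Definition zeta_t (t : R) (ks : list nat) : R :=
  fold_right (fun ps acc => t ^ (snd ps) * mzv (fst ps) + acc) 0 (compositions ks).

Definition zeta_half (ks : list nat) : R := zeta_t (1/2) ks.

(* Main.v *)
Require Import Defs.
From Stdlib Require Import Reals List Lia Lra ClassicalEpsilon.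
Import ListNotations.
Open Scope R_scope.

Lemma sum_lt_ext (f g : nat -> R) m :
  (forall i, (i < m)%nat -> f i = g i) -> sum_lt f m = sum_lt g m.
Proof.
  induction m; intros H; simpl; auto.
  rewrite IHm by (intros; apply H; lia). rewrite H by lia. reflexivity.
Qed.

Lemma sum_lt_plus f g m : sum_lt (fun i => f i + g i) m = sum_lt f m + sum_lt g m.
Proof. induction m; simpl; [lra|rewrite IHm; lra]. Qed.

Lemma sum_lt_scal c f m : c * sum_lt f m = sum_lt (fun i => c * f i) m.
Proof. induction m; simpl; [lra|rewrite <- IHm; lra]. Qed.

Lemma sum_lt_zero m : sum_lt (fun _ => 0) m = 0.
Proof. induction m; simpl; [lra|rewrite IHm; lra]. Qed.

Lemma sum_lt_swap (f : nat -> nat -> R) a b :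
  sum_lt (fun i => sum_lt (fun j => f i j) b) a =
  sum_lt (fun j => sum_lt (fun i => f i j) a) b.
Proof.
  induction a; simpl.
  - rewrite sum_lt_zero; reflexivity.
  - rewrite IHa, <- sum_lt_plus. reflexivity.
Qed.

Lemma sum_lt_nonneg f m : (forall i, (i < m)%nat -> 0 <= f i) -> 0 <= sum_lt f m.
Proof.
  induction m; intros H; simpl; [lra|].
  assert (0 <= sum_lt f m) by (apply IHm; intros; apply H; lia).
  assert (0 <= f m) by (apply H; lia). lra.
Qed.

Fixpoint tsum (M n : nat) (F : list nat -> R) : R :=
  match n with
  | O => F []
  | S n' => sum_lt (fun i => tsum M n' (fun xs => F (i :: xs))) M
  end.

Lemma tsum_ext M n F G :
  (forall xs, length xs = n -> Forall (fun x => x < M)%nat xs -> F xs = G xs) ->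
  tsum M n F = tsum M n G.
Proof.
  revert F G; induction n; intros F G H; simpl.
  - apply H; auto.
  - apply sum_lt_ext; intros i Hi. apply IHn. intros xs Hl Hf.
    apply H; simpl; auto.
Qed.

Lemma tsum_plus M n F G : tsum M n (fun xs => F xs + G xs) = tsum M n F + tsum M n G.
Proof.
  revert F G; induction n; intros F G; simpl; auto.
  rewrite <- sum_lt_plus. apply sum_lt_ext; intros. apply IHn.
Qed.

Lemma tsum_scal M n c F : c * tsum M n F = tsum M n (fun xs => c * F xs).
Proof.
  revert F; induction n; intros F; simpl; auto.
  rewrite sum_lt_scal. apply sum_lt_ext; intros. apply IHn.
Qed.

Lemma tsum_zero M n : tsum M n (fun _ => 0) = 0.
Proof. induction n; simpl; auto. transitivity (sum_lt (fun _ => 0) M); [apply sum_lt_ext; auto | apply sum_lt_zero]. Qed.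

Lemma tsum_sum_lt M n (F : nat -> list nat -> R) m :
  sum_lt (fun k => tsum M n (F k)) m = tsum M n (fun xs => sum_lt (fun k => F k xs) m).
Proof.
  induction m; simpl.
  - symmetry; apply tsum_zero.
  - rewrite IHm, <- tsum_plus. reflexivity.
Qed.

Lemma tsum_sum_f M n (F : nat -> list nat -> R) m :
  sum_f_R0 (fun k => tsum M n (F k)) m = tsum M n (fun xs => sum_f_R0 (fun k => F k xs) m).
Proof.
  induction m; simpl; auto.
  rewrite IHm, <- tsum_plus. reflexivity.
Qed.

Lemma tsum_mult M a b F G :
  tsum M a F * tsum M b G = tsum M (a + b) (fun z => F (firstn a z) * G (skipn a z)).
Proof.
  revert F; induction a; intros F; simpl.
  - rewrite tsum_scal. reflexivity.
  - rewrite Rmult_comm, sum_lt_scal. apply sum_lt_ext; intros i _.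
    rewrite Rmult_comm, IHa. reflexivity.
Qed.

Lemma tsum_snoc M n F :
  tsum M (S n) F = sum_lt (fun i => tsum M n (fun xs => F (xs ++ [i]))) M.
Proof.
  revert F; induction n; intros F.
  - reflexivity.
  - change (tsum M (S (S n)) F) with
      (sum_lt (fun i => tsum M (S n) (fun xs => F (i :: xs))) M).
    transitivity (sum_lt (fun i => sum_lt (fun j => tsum M n (fun ys => F (i :: ys ++ [j]))) M) M).
    { apply sum_lt_ext; intros; apply IHn. }
    rewrite sum_lt_swap. apply sum_lt_ext; intros j _. simpl. reflexivity.
Qed.

Lemma tsum_rev M n F : tsum M n F = tsum M n (fun z => F (rev z)).
Proof.
  revert F; induction n; intros F.
  - reflexivity.
  - rewrite tsum_snoc. simpl. apply sum_lt_ext; intros i _.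
    rewrite IHn. simpl. apply tsum_ext; intros xs _ _. reflexivity.
Qed.

Definition rel (a y : nat) : R :=
  if Nat.ltb y a then 1 else if Nat.eqb y a then 1/2 else 0.

Fixpoint wt (a : nat) (xs : list nat) : R :=
  match xs with [] => 1 | y :: ys => rel a y * wt y ys end.

Definition cw (xs : list nat) : R :=
  match xs with [] => 1 | x :: ys => wt x ys end.

Lemma rel_sym a b : rel a b + rel b a = 1.
Proof.
  unfold rel. destruct (Nat.ltb_spec b a); destruct (Nat.ltb_spec a b); try lia;
  destruct (Nat.eqb_spec b a); destruct (Nat.eqb_spec a b); try lia; lra.
Qed.

Lemma wt_snoc2 l x b a : wt x (l ++ [b; a]) = wt x (l ++ [b]) * rel b a.
Proof.
  revert x; induction l; intros x; simpl.
  - lra.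
  - rewrite IHl. lra.
Qed.

Lemma cw_snoc2 l b a : cw (l ++ [b; a]) = cw (l ++ [b]) * rel b a.
Proof.
  destruct l; simpl.
  - lra.
  - apply wt_snoc2.
Qed.

Definition PT (z : list nat) : R :=
  sum_f_R0 (fun k => (-1) ^ k * cw (firstn k z) * cw (rev (skipn k z))) (length z).

Lemma PT_zero z : z <> [] -> PT z = 0.
Proof.
  induction z as [|a z IH]; intros Hz; [congruence|].
  destruct z as [|b z].
  - unfold PT; simpl. lra.
  - unfold PT. set (m := length z).
    change (length (a :: b :: z)) with (S (S m)).
    rewrite decomp_sum by lia. simpl pred.
    rewrite decomp_sum by lia. simpl pred.
    assert (IH' := IH ltac:(congruence)). unfold PT in IH'.
    change (length (b :: z)) with (S m) in IH'.
    rewrite decomp_sum in IH' by lia. simpl pred in IH'.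
    set (X := cw (rev (b :: z))).
    assert (E0 : (-1) ^ 0 * cw (firstn 0 (a :: b :: z)) * cw (rev (skipn 0 (a :: b :: z)))
                 = X * rel b a).
    { simpl. unfold X. simpl. rewrite <- app_assoc. simpl. rewrite cw_snoc2. lra. }
    assert (E1 : (-1) ^ 1 * cw (firstn 1 (a :: b :: z)) * cw (rev (skipn 1 (a :: b :: z)))
                 = - X).
    { simpl. unfold X. simpl. lra. }
    assert (E2 : sum_f_R0 (fun i => (-1) ^ S (S i) * cw (firstn (S (S i)) (a :: b :: z))
                     * cw (rev (skipn (S (S i)) (a :: b :: z)))) m
               = - rel a b * sum_f_R0 (fun i => (-1) ^ S i * cw (firstn (S i) (b :: z))
                     * cw (rev (skipn (S i) (b :: z)))) m).
    { rewrite scal_sum. apply sum_eq; intros i _. simpl. lra. }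
    assert (E3 : (-1) ^ 0 * cw (firstn 0 (b :: z)) * cw (rev (skipn 0 (b :: z))) = X).
    { unfold X. simpl. lra. }
    rewrite E0, E1, E2. rewrite E3 in IH'.
    set (S' := sum_f_R0 _ m) in *.
    assert (HS : S' = - X) by lra. rewrite HS.
    replace (rel b a) with (1 - rel a b) by (pose proof (rel_sym a b); lra). ring.
Qed.

Definition FR (g : list nat * nat -> R) (l : list (list nat * nat)) : R :=
  fold_right (fun ps acc => g ps + acc) 0 l.

Lemma FR_plus g h l : FR (fun ps => g ps + h ps) l = FR g l + FR h l.
Proof. induction l; simpl; [lra|]. unfold FR in *; simpl. rewrite IHl. lra. Qed.

Lemma FR_scal c g l : c * FR g l = FR (fun ps => c * g ps) l.
Proof. induction l; unfold FR in *; simpl; [lra|]. rewrite <- IHl. lra. Qed.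

Lemma FR_ext_in g h l : (forall ps, In ps l -> g ps = h ps) -> FR g l = FR h l.
Proof.
  induction l; intros H; unfold FR in *; simpl; auto.
  rewrite H by (left; auto). rewrite IHl; auto. intros; apply H; right; auto.
Qed.

Lemma FR_app g l1 l2 : FR g (l1 ++ l2) = FR g l1 + FR g l2.
Proof. induction l1; unfold FR in *; simpl; [lra|]. rewrite IHl1. lra. Qed.

Lemma FR_flat_map g f l : FR g (flat_map f l) = FR (fun ps => FR g (f ps)) l.
Proof.
  induction l; simpl; auto. rewrite FR_app, IHl. reflexivity.
Qed.

Lemma FR_sum_lt (h : nat -> list nat * nat -> R) m l :
  FR (fun ps => sum_lt (fun i => h i ps) m) l = sum_lt (fun i => FR (h i) l) m.
Proof.
  induction l; unfold FR in *; simpl.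
  - symmetry. apply sum_lt_zero.
  - rewrite IHl. rewrite <- sum_lt_plus. reflexivity.
Qed.

Definition zt (N : nat) (ks : list nat) : R :=
  FR (fun ps => (1/2) ^ snd ps * mzv_trunc N (fst ps)) (compositions ks).

Definition e (i : nat) (p : list nat) : R :=
  match p with [] => 0 | k :: p' => / (INR (S i)) ^ k * mzv_trunc (S i) p' end.

Definition et (i : nat) (ks : list nat) : R :=
  FR (fun ps => (1/2) ^ snd ps * e i (fst ps)) (compositions ks).

Fixpoint mon (ks xs : list nat) : R :=
  match ks, xs with
  | k :: ks', x :: xs' => / (INR (S x)) ^ k * mon ks' xs'
  | _, _ => 1
  end.

Lemma comp_nonempty k rest ps : In ps (compositions (k :: rest)) -> fst ps <> [].
Proof.
  simpl. rewrite in_flat_map. intros [x [_ Hx]].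
  destruct (fst x) as [|q p']; simpl in Hx.
  - destruct Hx as [<-|[]]; simpl; congruence.
  - destruct Hx as [<-|[<-|[]]]; simpl; congruence.
Qed.

Lemma zt_nil N : zt N [] = 1.
Proof. unfold zt, FR; simpl. lra. Qed.

Lemma et_nil i : et i [] = 0.
Proof. unfold et, FR; simpl. lra. Qed.

Lemma zt_et N ks : ks <> [] -> zt N ks = sum_lt (fun i => et i ks) (pred N).
Proof.
  intros Hks. destruct ks as [|k rest]; [congruence|].
  unfold zt, et.
  rewrite <- FR_sum_lt. apply FR_ext_in. intros ps Hps.
  apply comp_nonempty in Hps. destruct (fst ps) as [|q p'] eqn:Ef; [congruence|].
  simpl. rewrite sum_lt_scal. reflexivity.
Qed.

Lemma et_rec i k rest :
  et i (k :: rest) = / (INR (S i)) ^ k * (zt (S i) rest + 1/2 * et i rest).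
Proof.
  unfold et at 1. simpl compositions. rewrite FR_flat_map.
  unfold zt, et. rewrite FR_scal, <- FR_plus, FR_scal.
  apply FR_ext_in. intros [p s] _. simpl.
  destruct p as [|q p']; unfold FR; simpl.
  - ring.
  - rewrite pow_add.
    assert (INR (S i) <> 0) by (apply not_0_INR; lia).
    rewrite Rinv_mult. ring.
Qed.

Lemma sum_rel i X M :
  sum_lt (fun j => rel i j * X j) M =
  sum_lt X (Nat.min M i) + (if Nat.ltb i M then 1/2 * X i else 0).
Proof.
  induction M.
  - simpl. lra.
  - cbn [sum_lt]. rewrite IHM. unfold rel.
    destruct (Nat.ltb_spec M i).
    + rewrite Nat.min_l by lia. rewrite Nat.min_l by lia. cbn [sum_lt].
      destruct (Nat.ltb_spec i M); try lia. destruct (Nat.ltb_spec i (S M)); try lia. lra.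
    + destruct (Nat.eqb_spec M i).
      * subst. rewrite Nat.min_r by lia. rewrite Nat.min_r by lia.
        destruct (Nat.ltb_spec i i); try lia. destruct (Nat.ltb_spec i (S i)); try lia. lra.
      * rewrite Nat.min_r by lia. rewrite Nat.min_r by lia.
        destruct (Nat.ltb_spec i M); try lia. destruct (Nat.ltb_spec i (S M)); try lia. lra.
Qed.

Lemma et_tuple rest : forall k i M, (i < M)%nat ->
  et i (k :: rest) = tsum M (length rest) (fun xs => wt i xs * (/ (INR (S i)) ^ k * mon rest xs)).
Proof.
  induction rest as [|r rest' IH]; intros k i M HiM.
  - rewrite et_rec, zt_nil, et_nil. simpl. ring.
  - rewrite et_rec. simpl length. simpl tsum.
    transitivity (sum_lt (fun j => rel i j * (/ (INR (S i)) ^ k * et j (r :: rest'))) M).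
    2:{ apply sum_lt_ext; intros j Hj. rewrite (IH r j M Hj).
        rewrite tsum_scal, tsum_scal. apply tsum_ext; intros xs _ _. simpl. ring. }
    rewrite sum_rel. rewrite Nat.min_r by lia.
    destruct (Nat.ltb_spec i M); try lia.
    rewrite zt_et by congruence. simpl pred.
    rewrite Rmult_plus_distr_l, sum_lt_scal. ring.
Qed.

Lemma zt_tuple N ks : zt N ks = tsum (pred N) (length ks) (fun xs => cw xs * mon ks xs).
Proof.
  destruct ks as [|k rest].
  - rewrite zt_nil. simpl. ring.
  - rewrite zt_et by congruence. simpl length. simpl tsum.
    apply sum_lt_ext; intros i Hi. rewrite (et_tuple rest k i (pred N) Hi).
    apply tsum_ext; intros xs _ _. simpl. reflexivity.
Qed.

Lemma mon_nil_r ks : mon ks [] = 1.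
Proof. destruct ks; reflexivity. Qed.

Lemma mon_split k : forall L z,
  mon L z = mon (firstn k L) (firstn k z) * mon (skipn k L) (skipn k z).
Proof.
  induction k; intros L z.
  - simpl. ring.
  - destruct L as [|a L]; destruct z as [|x z]; simpl; try ring.
    + rewrite mon_nil_r. ring.
    + rewrite (IHk L z). ring.
Qed.

Lemma mon_app a : forall y b w, length a = length y ->
  mon (a ++ b) (y ++ w) = mon a y * mon b w.
Proof.
  induction a as [|k a IH]; intros y b w H; destruct y as [|x y]; simpl in *; try lia.
  - ring.
  - rewrite IH by lia. ring.
Qed.

Lemma mon_rev a : forall y, length a = length y -> mon (rev a) (rev y) = mon a y.
Proof.
  induction a as [|k a IH]; intros y H; destruct y as [|x y]; simpl in *; try lia.
  - reflexivity.
  - rewrite mon_app by (rewrite !length_rev; lia). rewrite IH by lia. simpl. ring.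
Qed.

Lemma trunc_identity N L : L <> [] ->
  sum_f_R0 (fun k => (-1) ^ k * zt N (firstn k L) * zt N (rev (skipn k L))) (length L) = 0.
Proof.
  intros HL. set (M := pred N). set (n := length L).
  transitivity (sum_f_R0 (fun k => tsum M n
     (fun z => (-1) ^ k * (cw (firstn k z) * cw (rev (skipn k z))) * mon L z)) n).
  - apply sum_eq; intros k Hk.
    rewrite (zt_tuple N (firstn k L)), (zt_tuple N (rev (skipn k L))).
    fold M. rewrite length_firstn, length_rev, length_skipn. fold n.
    rewrite Nat.min_l by lia.
    rewrite (tsum_rev M (n - k)).
    rewrite Rmult_assoc, tsum_mult, tsum_scal.
    replace (k + (n - k))%nat with n by lia.
    apply tsum_ext; intros z Hz _.
    idtac.
    rewrite (mon_split k L z).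
    rewrite (mon_rev (skipn k L) (skipn k z)).
    + ring.
    + rewrite !length_skipn. unfold n in Hz. lia.
  - rewrite tsum_sum_f. rewrite <- (tsum_zero M n). apply tsum_ext; intros z Hz _.
    assert (Hz0 : z <> []) by (intros ->; simpl in Hz; unfold n in Hz; destruct L; simpl in *; congruence).
    pose proof (PT_zero z Hz0) as HP. unfold PT in HP. rewrite Hz in HP.
    transitivity (mon L z * sum_f_R0 (fun k => (-1) ^ k * cw (firstn k z) * cw (rev (skipn k z))) n).
    + rewrite scal_sum. apply sum_eq; intros; ring.
    + rewrite HP. ring.
Qed.

Lemma mzv_cons N k ks :
  mzv_trunc N (k :: ks) = sum_lt (fun i => / (INR (S i)) ^ k * mzv_trunc (S i) ks) (pred N).
Proof. reflexivity. Qed.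

Lemma term_pos i k : 0 < / (INR (S i)) ^ k.
Proof. apply Rinv_0_lt_compat, pow_lt, lt_0_INR; lia. Qed.

Lemma mzv_nonneg p : forall N, 0 <= mzv_trunc N p.
Proof.
  induction p as [|k p IH]; intros N.
  - simpl; lra.
  - rewrite mzv_cons. apply sum_lt_nonneg; intros i _.
    apply Rmult_le_pos; [left; apply term_pos | apply IH].
Qed.

Lemma inv_pow_le i k : (2 <= k)%nat -> / (INR (S i)) ^ k <= / (INR (S i)) ^ 2.
Proof.
  intros Hk. apply Rinv_le_contravar.
  - apply pow_lt, lt_0_INR; lia.
  - apply Rle_pow; [|lia]. rewrite S_INR. pose proof (pos_INR i). lra.
Qed.

Lemma key_ineq x : 1 <= x -> / (x + 1) ^ 2 + / (x + 1) <= / x.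
Proof.
  intros Hx.
  assert (E : / x - (/ (x + 1) ^ 2 + / (x + 1)) = / (x * (x + 1) ^ 2)).
  { field. lra. }
  assert (0 < / (x * (x + 1) ^ 2)).
  { apply Rinv_0_lt_compat. apply Rmult_lt_0_compat; [lra|]. apply pow_lt; lra. }
  lra.
Qed.

Lemma base_bound k : (2 <= k)%nat -> forall m,
  sum_lt (fun i => / (INR (S i)) ^ k * 1) m <= 2.
Proof.
  intros Hk.
  assert (H : forall m, sum_lt (fun i => / (INR (S i)) ^ k * 1) (S m) <= 2 - / INR (S m)).
  { induction m.
    - simpl. rewrite pow1, Rinv_1. lra.
    - change (sum_lt (fun i => / INR (S i) ^ k * 1) (S (S m))) with
        (sum_lt (fun i => / INR (S i) ^ k * 1) (S m) + / INR (S (S m)) ^ k * 1).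
      pose proof (inv_pow_le (S m) k Hk).
      pose proof (key_ineq (INR (S m))).
      rewrite (S_INR (S m)) in *.
      assert (1 <= INR (S m)) by (rewrite S_INR; pose proof (pos_INR m); lra).
      match goal with HH : 1 <= INR (S m) -> _ |- _ => specialize (HH ltac:(assumption)) end. lra. }
  intros [|m]; [simpl; lra|].
  specialize (H m). assert (0 < / INR (S m)) by (apply Rinv_0_lt_compat, lt_0_INR; lia). lra.
Qed.

Lemma swap_bound k k' rest : (2 <= k)%nat -> forall N,
  mzv_trunc N (k :: k' :: rest) <= mzv_trunc N (S k' :: rest).
Proof.
  intros Hk.
  set (a := fun i => / (INR (S i)) ^ k' * mzv_trunc (S i) rest).
  set (F := fun n => sum_lt (fun i => / (INR (S i)) ^ k * mzv_trunc (S i) (k' :: rest)) n).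
  set (G := fun n => sum_lt (fun i => / (INR (S i)) ^ (S k') * mzv_trunc (S i) rest) n).
  set (T := fun n => sum_lt a n).
  assert (HT : forall n, 0 <= T n).
  { intros n. unfold T. apply sum_lt_nonneg. intros i _. unfold a.
    apply Rmult_le_pos; [left; apply term_pos | apply mzv_nonneg]. }
  assert (HTm : forall i, mzv_trunc (S i) (k' :: rest) = T i) by reflexivity.
  assert (Hclaim : forall n, F (S n) + T (S n) * / INR (S n) <= G (S n)).
  { induction n.
    - unfold F, G, T. simpl sum_lt. unfold a. change (INR 1) with 1. rewrite !pow1, Rmult_1_l, !Rinv_1. lra.
    - change (F (S (S n))) with (F (S n) + / (INR (S (S n))) ^ k * mzv_trunc (S (S n)) (k' :: rest)).
      change (G (S (S n))) with (G (S n) + / (INR (S (S n))) ^ (S k') * mzv_trunc (S (S n)) rest).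
      change (T (S (S n))) with (T (S n) + a (S n)).
      rewrite HTm. unfold a.
      set (x := INR (S n)).
      assert (Hy : INR (S (S n)) = x + 1) by (unfold x; apply S_INR).
      rewrite Hy.
      assert (Hx : 1 <= x) by (unfold x; rewrite S_INR; pose proof (pos_INR n); lra).
      pose proof (key_ineq x Hx).
      pose proof (inv_pow_le (S n) k Hk) as Hb. rewrite Hy in Hb.
      assert (Hpx : 0 < x + 1) by lra.
      assert (E : / (x + 1) ^ S k' = / (x + 1) * / (x + 1) ^ k').
      { simpl. rewrite Rinv_mult. reflexivity. }
      rewrite E.
      set (b := / (x + 1) ^ k) in *.
      set (c := / (x + 1) ^ k' * mzv_trunc (S (S n)) rest).
      assert (T (S n) * (b + / (x + 1)) <= T (S n) * / x).
      { apply Rmult_le_compat_l; [apply HT| lra]. }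
      replace (/ (x + 1) * / (x + 1) ^ k' * mzv_trunc (S (S n)) rest) with (/ (x+1) * c) by (unfold c; ring).
      replace (/ (x + 1) ^ k' * mzv_trunc (S (S n)) rest) with c by reflexivity.
      rewrite Rmult_plus_distr_l in *. rewrite Rmult_plus_distr_r. change (INR (S n)) with x in IHn. lra. }
  intros [|[|n]].
  - simpl. lra.
  - simpl. lra.
  - specialize (Hclaim n).
    change (mzv_trunc (S (S n)) (k :: k' :: rest)) with (F (S n)).
    change (mzv_trunc (S (S n)) (S k' :: rest)) with (G (S n)).
    pose proof (HT (S n)).
    assert (0 < / INR (S n)) by (apply Rinv_0_lt_compat, lt_0_INR; lia).
    nra.
Qed.

Lemma mzv_bound rest : forall k, (2 <= k)%nat -> Forall (fun x => 1 <= x)%nat rest ->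
  forall N, mzv_trunc N (k :: rest) <= 2.
Proof.
  induction rest as [|k' rest IH]; intros k Hk Hf N.
  - rewrite mzv_cons. apply base_bound; auto.
  - eapply Rle_trans; [apply swap_bound; auto|].
    inversion Hf; subst. apply IH; auto. lia.
Qed.

Lemma mzv_growing p : Un_growing (fun N => mzv_trunc N p).
Proof.
  intros N. destruct p as [|k p].
  - simpl; lra.
  - rewrite !mzv_cons. destruct N as [|N]; simpl pred.
    + lra.
    + cbn [sum_lt]. pose proof (term_pos N k). pose proof (mzv_nonneg p (S N)).
      assert (0 <= / INR (S N) ^ k * mzv_trunc (S N) p) by (apply Rmult_le_pos; lra). lra.
Qed.

Lemma seq_lim_spec u l : Un_cv u l -> seq_lim u = l.
Proof.
  intros H. unfold seq_lim.
  destruct (excluded_middle_informative (exists l, Un_cv u l)) as [e|n].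
  - destruct (constructive_indefinite_description _ e) as [l' Hl']. simpl.
    eapply UL_sequence; eauto.
  - exfalso; apply n; eauto.
Qed.

Lemma cv_const c : Un_cv (fun _ => c) c.
Proof. intros eps He. exists 0%nat. intros. unfold R_dist. rewrite Rminus_diag, Rabs_R0. auto. Qed.

Definition good (p : list nat) : Prop :=
  Forall (fun x => 1 <= x)%nat p /\ (p = [] \/ (2 <= hd 0 p)%nat).

Lemma mzv_cv p : good p -> Un_cv (fun N => mzv_trunc N p) (mzv p).
Proof.
  intros [Hf Hh].
  assert (Ex : exists l, Un_cv (fun N => mzv_trunc N p) l).
  { destruct p as [|k p].
    - exists 1. simpl. apply cv_const.
    - destruct Hh as [Hh|Hh]; [congruence|]. simpl in Hh.
      inversion Hf; subst.
      destruct (growing_cv _ (mzv_growing (k :: p))) as [l Hl].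
      + exists 2. intros x [i ->]. apply mzv_bound; auto.
      + exists l; auto. }
  destruct Ex as [l Hl]. unfold mzv. rewrite (seq_lim_spec _ _ Hl). auto.
Qed.

Lemma comp_good ks ps : Forall (fun x => 1 <= x)%nat ks -> In ps (compositions ks) ->
  Forall (fun x => 1 <= x)%nat (fst ps) /\ (hd 0 ks <= hd 0 (fst ps))%nat.
Proof.
  revert ps; induction ks as [|k rest IH]; intros ps Hf Hin.
  - simpl in Hin. destruct Hin as [<-|[]]. simpl. auto.
  - inversion Hf; subst. simpl in Hin. rewrite in_flat_map in Hin.
    destruct Hin as [x [Hx Hps]]. destruct (IH x H2 Hx) as [Hfx _].
    destruct (fst x) as [|q p'] eqn:E; simpl in Hps.
    + destruct Hps as [<-|[]]. simpl. auto.
    + inversion Hfx; subst.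
      destruct Hps as [<-|[<-|[]]]; simpl; split; auto; try lia.
      constructor; auto. lia.
Qed.

Lemma FR_cv l (g : nat -> list nat * nat -> R) h :
  (forall ps, In ps l -> Un_cv (fun N => g N ps) (h ps)) ->
  Un_cv (fun N => FR (g N) l) (FR h l).
Proof.
  induction l as [|a l IH]; intros H.
  - unfold FR; simpl. apply cv_const.
  - unfold FR; simpl. apply CV_plus.
    + apply H; left; auto.
    + apply IH; intros; apply H; right; auto.
Qed.

Lemma zh_cv ks : Forall (fun x => 1 <= x)%nat ks -> (ks = [] \/ (2 <= hd 0 ks)%nat) ->
  Un_cv (fun N => zt N ks) (zeta_half ks).
Proof.
  intros Hf Hh.
  change (zeta_half ks) with (FR (fun ps => (1/2) ^ snd ps * mzv (fst ps)) (compositions ks)).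
  unfold zt. apply FR_cv. intros ps Hps.
  apply CV_mult; [apply cv_const|]. apply mzv_cv.
  destruct (comp_good ks ps Hf Hps) as [Hf' Hh']. split; auto.
  destruct Hh as [->|Hh].
  - simpl in Hps. destruct Hps as [<-|[]]. left; reflexivity.
  - right. lia.
Qed.

Lemma sum_cv (u : nat -> nat -> R) (l : nat -> R) n :
  (forall k, (k <= n)%nat -> Un_cv (fun N => u N k) (l k)) ->
  Un_cv (fun N => sum_f_R0 (u N) n) (sum_f_R0 l n).
Proof.
  induction n; intros H; simpl.
  - apply H; lia.
  - apply CV_plus; [apply IHn; intros; apply H; lia| apply H; lia].
Qed.

Lemma seq_split k : forall s n, (k <= n)%nat ->
  firstn k (seq s n) = seq s k /\ skipn k (seq s n) = seq (s + k) (n - k).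
Proof.
  induction k; intros s n H.
  - simpl. rewrite Nat.add_0_r, Nat.sub_0_r. auto.
  - destruct n; [lia|]. simpl. destruct (IHk (S s) n ltac:(lia)) as [H1 H2].
    rewrite H1, H2. replace (S s + k)%nat with (s + S k)%nat by lia. auto.
Qed.

Lemma Forall_f (j : nat -> nat) l :
  Forall (fun x => 1 <= x)%nat (map (fun i => (2 * j i + 1)%nat) l).
Proof. apply Forall_forall. intros x Hx. apply in_map_iff in Hx. destruct Hx as [i [<- _]]. lia. Qed.

Theorem mainTheorem9 (n : nat) (j : nat -> nat)
  (hn : (1 <= n)%nat) (hj1 : (1 <= j 1%nat)%nat) (hjn : (1 <= j n)%nat) :
  sum_f_R0 (fun k =>
      (-1) ^ k
      * zeta_half (map (fun i => (2 * j i + 1)%nat) (seq 1 k))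
      * zeta_half (map (fun i => (2 * j i + 1)%nat) (rev (seq (S k) (n - k)))))
    n = 0.
Proof.
  set (f := fun i => (2 * j i + 1)%nat).
  set (A := fun k => map f (seq 1 k)).
  set (B := fun k => map f (rev (seq (S k) (n - k)))).
  change (sum_f_R0 (fun k => (-1) ^ k * zeta_half (A k) * zeta_half (B k)) n = 0).
  apply (UL_sequence (fun N => sum_f_R0 (fun k => (-1) ^ k * zt N (A k) * zt N (B k)) n)).
  - apply sum_cv. intros k Hk.
    apply CV_mult; [apply CV_mult; [apply cv_const|]|].
    + apply zh_cv; [apply Forall_f|].
      destruct k as [|k]; [left; reflexivity|right]. unfold A. simpl. unfold f. lia.
    + apply zh_cv; [apply Forall_f|].
      destruct (Nat.eq_dec k n) as [->|Hkn].
      * left. unfold B. rewrite Nat.sub_diag. reflexivity.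
      * right. unfold B. replace (n - k)%nat with (S (n - k - 1)) by lia.
        rewrite seq_S, rev_app_distr. simpl.
        replace (S (k + (n - k - 1))) with n by lia. unfold f. lia.
  -     assert (Heq : forall N, sum_f_R0 (fun k => (-1) ^ k * zt N (A k) * zt N (B k)) n = 0).
    { intros N. set (L := map f (seq 1 n)).
      assert (HL : length L = n) by (unfold L; rewrite length_map, length_seq; auto).
      rewrite <- (trunc_identity N L).
      - rewrite HL. apply sum_eq. intros k Hk.
        destruct (seq_split k 1 n Hk) as [H1 H2].
        unfold A, B, L. rewrite firstn_map, skipn_map, H1, H2, map_rev. reflexivity.
      - intros E. rewrite E in HL. simpl in HL. lia. }
    intros eps He. exists O. intros m _. rewrite Heq. unfold R_dist. rewrite Rminus_diag, Rabs_R0. auto.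
Qed.
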